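(* Let $\mathcal L$ be an MV-algebra and let $P\subsetneq Q$ be prime implication filters. For all $\mathcal F,\mathcal G\in\mathrm{PSpec}(P)$, $$q_Q(\mathcal F^+)=\lnot\, q_Q(\mathcal F)\quad\text{and}\quad q_Q(\mathcal F\sqsubseteq\!\!\to\mathcal G)=q_Q(\mathcal F)\to q_Q(\mathcal G),$$ where $\lnot$ and $\to$ on the right are the operations of $\mathcal L/Q$. Thus $\mathcal F\mapsto q_Q(\mathcal F)$ induces an MV-morphism $\hat\eta_{PQ}\colon\hat{\mathcal L}_P\to\mathcal L/Q$.
   Context: $\mathcal L=(L,\oplus,\lnot,0)$ is an MV-algebra. We write $1=\lnot0$, $x\otimes y=\lnot(\lnot x\oplus\lnot y)$, and $x\to y=\lnot x\oplus y$. An implication filter is a set $P\ni1$ closed under modus ponens. $\mathcal L/P$ is the quotient by $x\sim_P y\iff x\to y,\ y\to x\in P$, with cosets $[x]_P$. $P$ is prime if $\mathcal L/P$ is linearly ordered. A lattice filter is a nonempty upward-closed subset closed under $\wedge$; it is prime if it is proper and $a\vee b\in\mathcal F$ implies $a\in\mathcal F$ or $b\in\mathcal F$. For upward-closed $\mathcal F$ and $a\in L$, let $\mathcal F_a=\{z:z\to a\notin\mathcal F\}$, $\mathcal F^+=\mathcal F_0$, and $\mathcal K(\mathcal F)=\{z:\forall a\notin\mathcal F,\ z\to a\notin\mathcal F\}$. $\mathrm{PSpec}(P)$ is the set of prime lattice filters with kernel $P$. For $\mathcal F\subseteq\mathcal G$ we put $\mathcal F\sqsubseteq\!\!\to\mathcal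 G=\bigcap_{a\notin\mathcal G}\mathcal F_a$, and in general $\mathcal F\sqsubseteq\!\!\to\mathcal G:=(\mathcal F\cap\mathcal G)\sqsubseteq\!\!\to\mathcal G$. For a prime lattice filter $\mathcal F$ and a prime implication filter $Q$ properly containing $\mathcal K(\mathcal F)$, $q_Q(\mathcal F)$ denotes the unique $Q$-coset $C$ with $C\cap\mathcal F\ne\emptyset\ne C\setminus\mathcal F$. $\hat{\mathcal L}_P$ is $\mathrm{PSpec}(P)$ modulo the relation $\mathcal F\equiv\mathcal G\iff\mathcal F\sqsubseteq\!\!\to\mathcal G=\mathcal G\sqsubseteq\!\!\to\mathcal F=P$, with operations ${}^+$ and $\sqsubseteq\!\!\to$. *)

(* Defs.v *)
From Stdlib Require Import ClassicalEpsilon.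

Record MVAlgebra := {
  carrier :> Type;
  oplus : carrier -> carrier -> carrier;
  mvneg : carrier -> carrier;
  mvzero : carrier;
  oplus_assoc : forall x y z, oplus x (oplus y z) = oplus (oplus x y) z;
  oplus_comm : forall x y, oplus x y = oplus y x;
  oplus_zero : forall x, oplus x mvzero = x;
  neg_neg : forall x, mvneg (mvneg x) = x;
  oplus_one : forall x, oplus x (mvneg mvzero) = mvneg mvzero;
  mv_luk : forall x y,
    oplus (mvneg (oplus (mvneg x) y)) y = oplus (mvneg (oplus (mvneg y) x)) x
}.

Arguments oplus {_}.
Arguments mvneg {_}.
Arguments mvzero {_}.

Section MV.
Variable L : MVAlgebra.

Definition mvone : L := mvneg mvzero.
Definition mvimp (x y : L) : L := oplus (mvneg x) y.
Definition mvjoin (x y : L) : L := oplus (mvneg (oplus (mvneg x) y)) y.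
Definition mvmeet (x y : L) : L := mvneg (mvjoin (mvneg x) (mvneg y)).
Definition mvle (x y : L) : Prop := mvimp x y = mvone.

Definition impl_filter (P : L -> Prop) : Prop :=
  P mvone /\ (forall x y, P x -> P (mvimp x y) -> P y).

Definition equivP (P : L -> Prop) (x y : L) : Prop :=
  P (mvimp x y) /\ P (mvimp y x).

Definition coset (P : L -> Prop) (x : L) : L -> Prop := fun z => equivP P x z.

(* P is prime iff L/P is linearly ordered ([x] <= [y] iff x -> y in P) *)
Definition prime_impl_filter (P : L -> Prop) : Prop :=
  impl_filter P /\ (forall x y, P (mvimp x y) \/ P (mvimp y x)).

Definition upward_closed (F : L -> Prop) : Prop :=
  forall x y, F x -> mvle x y -> F y.

Definition lattice_filter (F : L -> Prop) : Prop :=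
  (exists x, F x) /\ upward_closed F /\ (forall x y, F x -> F y -> F (mvmeet x y)).

Definition prime_lattice_filter (F : L -> Prop) : Prop :=
  lattice_filter F /\ (exists a, ~ F a) /\
  (forall a b, F (mvjoin a b) -> F a \/ F b).

Definition Fsub (F : L -> Prop) (a : L) : L -> Prop := fun z => ~ F (mvimp z a).
Definition Fplus (F : L -> Prop) : L -> Prop := Fsub F mvzero.
Definition kernel (F : L -> Prop) : L -> Prop :=
  fun z => forall a, ~ F a -> ~ F (mvimp z a).

Definition PSpec (P F : L -> Prop) : Prop :=
  prime_lattice_filter F /\ kernel F = P.

(* F [=-> G := (F /\ G) [=-> G = intersection over a notin G of (F /\ G)_a *)
Definition sqimp (F G : L -> Prop) : L -> Prop :=
  fun z => forall a, ~ G a -> Fsub (fun w => F w /\ G w) a z.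

(* F == G in \hat L_P *)
Definition hat_equiv (P F G : L -> Prop) : Prop :=
  sqimp F G = P /\ sqimp G F = P.

Definition boundary_coset (Q F C : L -> Prop) : Prop :=
  (exists x, C = coset Q x) /\ (exists z, C z /\ F z) /\ (exists z, C z /\ ~ F z).

(* q_Q(F): the (unique, under the paper's hypotheses) boundary Q-coset of F *)
Definition qQ (Q F : L -> Prop) : L -> Prop :=
  epsilon (inhabits (fun _ : L => False)) (boundary_coset Q F).

(* operations of L/Q on cosets: ~[x] = [~x], [x] -> [y] = [x -> y] *)
Definition coset_neg (Q C : L -> Prop) : L -> Prop :=
  fun z => exists x, C x /\ equivP Q z (mvneg x).
Definition coset_imp (Q C D : L -> Prop) : L -> Prop :=
  fun z => exists x y, C x /\ D y /\ equivP Q z (mvimp x y).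

End MV.

Arguments mvone {_}.

(* Main.v *)
Require Import Defs.
From Stdlib Require Import Classical ClassicalEpsilon FunctionalExtensionality PropExtensionality.

Notation "x ==> y" := (mvimp _ x y) (at level 55, right associativity).

Lemma oplus_lcomm (L : MVAlgebra) (x y z : L) : oplus x (oplus y z) = oplus y (oplus x z).
Proof. rewrite !oplus_assoc, (oplus_comm _ x y). reflexivity. Qed.

Lemma neg_one (L : MVAlgebra) : mvneg (mvone : L) = mvzero.
Proof. unfold mvone. apply neg_neg. Qed.

Lemma zero_oplus (L : MVAlgebra) (x : L) : oplus mvzero x = x.
Proof. rewrite oplus_comm. apply oplus_zero. Qed.

Lemma negx_x (L : MVAlgebra) (x : L) : oplus (mvneg x) x = mvone.
Proof.
  pose proof (mv_luk L x mvone) as H. unfold mvone in *.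
  rewrite oplus_one, neg_neg, zero_oplus in H. rewrite <- H. reflexivity.
Qed.

Lemma one_oplus (L : MVAlgebra) (x : L) : oplus mvone x = mvone.
Proof. rewrite oplus_comm. apply oplus_one. Qed.

Lemma imp_refl (L : MVAlgebra) (x : L) : x ==> x = mvone.
Proof. apply negx_x. Qed.

Lemma imp_one (L : MVAlgebra) (x : L) : x ==> mvone = mvone.
Proof. apply oplus_one. Qed.

Lemma one_imp (L : MVAlgebra) (x : L) : mvone ==> x = x.
Proof. unfold mvimp. rewrite neg_one. apply zero_oplus. Qed.

Lemma imp_zero (L : MVAlgebra) (x : L) : x ==> mvzero = mvneg x.
Proof. apply oplus_zero. Qed.

Lemma imp_exch (L : MVAlgebra) (x y z : L) : x ==> (y ==> z) = y ==> (x ==> z).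
Proof. unfold mvimp. apply oplus_lcomm. Qed.

Lemma imp_K (L : MVAlgebra) (x y : L) : x ==> (y ==> x) = mvone.
Proof. rewrite imp_exch, imp_refl. apply imp_one. Qed.

Lemma imp_contra (L : MVAlgebra) (x y : L) : mvneg x ==> mvneg y = y ==> x.
Proof. unfold mvimp. rewrite neg_neg. apply oplus_comm. Qed.

Lemma join_l (L : MVAlgebra) (x y : L) : x ==> mvjoin L x y = mvone.
Proof.
  unfold mvjoin, mvimp. rewrite mv_luk, oplus_lcomm, negx_x. apply oplus_one.
Qed.

Lemma join_r (L : MVAlgebra) (x y : L) : y ==> mvjoin L x y = mvone.
Proof.
  unfold mvjoin, mvimp. rewrite oplus_lcomm, negx_x. apply oplus_one.
Qed.

Lemma joinE (L : MVAlgebra) (x y : L) : (x ==> y) ==> y = mvjoin L x y.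
Proof. reflexivity. Qed.

Lemma imp_T (L : MVAlgebra) (x y z : L) : (x ==> y) ==> ((y ==> z) ==> (x ==> z)) = mvone.
Proof.
  unfold mvimp. set (a := mvneg x).
  rewrite (oplus_comm _ a z), (oplus_assoc _ (mvneg (oplus (mvneg y) z)) z a), mv_luk.
  rewrite <- oplus_assoc, (oplus_comm _ y a), oplus_lcomm, negx_x. apply oplus_one.
Qed.

Lemma imp_T2 (L : MVAlgebra) (x y z : L) : (y ==> z) ==> ((x ==> y) ==> (x ==> z)) = mvone.
Proof. rewrite imp_exch. apply imp_T. Qed.


Lemma f_le (L : MVAlgebra) (Q : L -> Prop) x y :
  impl_filter L Q -> Q x -> x ==> y = mvone -> Q y.
Proof. intros [H1 H2] Hx E. apply (H2 x y Hx). rewrite E. exact H1. Qed.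

Lemma f_trans (L : MVAlgebra) (Q : L -> Prop) x y z :
  impl_filter L Q -> Q (x ==> y) -> Q (y ==> z) -> Q (x ==> z).
Proof.
  intros HQ H1 H2. pose proof (f_le _ _ _ _ HQ H1 (imp_T L x y z)).
  destruct HQ as [_ HQ]. eauto.
Qed.

Lemma f_one (L : MVAlgebra) (Q : L -> Prop) x : impl_filter L Q -> Q (x ==> x).
Proof. intros HQ. rewrite imp_refl. apply HQ. Qed.

Lemma eq_refl' (L : MVAlgebra) (Q : L -> Prop) x : impl_filter L Q -> equivP L Q x x.
Proof. intros HQ; split; apply f_one; auto. Qed.

Lemma eq_sym (L : MVAlgebra) (Q : L -> Prop) x y : equivP L Q x y -> equivP L Q y x.
Proof. intros [a b]; split; auto. Qed.

Lemma eq_trans (L : MVAlgebra) (Q : L -> Prop) x y z : impl_filter L Q ->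
  equivP L Q x y -> equivP L Q y z -> equivP L Q x z.
Proof. intros HQ [a b] [c d]; split; eapply f_trans; eauto. Qed.

Lemma eq_neg (L : MVAlgebra) (Q : L -> Prop) x y : equivP L Q x y -> equivP L Q (mvneg x) (mvneg y).
Proof. intros [a b]; split; rewrite imp_contra; auto. Qed.

Lemma le_imp (L : MVAlgebra) (Q : L -> Prop) x y a b : impl_filter L Q ->
  Q (a ==> x) -> Q (y ==> b) -> Q ((x ==> y) ==> (a ==> b)).
Proof.
  intros HQ H1 H2.
  pose proof (f_le _ _ _ _ HQ H1 (imp_T L a x y)).
  pose proof (f_le _ _ _ _ HQ H2 (imp_T2 L a y b)).
  eapply f_trans; eauto.
Qed.

Lemma eq_imp (L : MVAlgebra) (Q : L -> Prop) x y a b : impl_filter L Q ->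
  equivP L Q x a -> equivP L Q y b -> equivP L Q (x ==> y) (a ==> b).
Proof. intros HQ [] []; split; apply le_imp; auto. Qed.

Lemma coset_eq (L : MVAlgebra) (Q : L -> Prop) x y : impl_filter L Q ->
  equivP L Q x y -> coset L Q x = coset L Q y.
Proof.
  intros HQ H. apply functional_extensionality; intro z. apply propositional_extensionality.
  unfold coset; split; intro; eapply eq_trans; eauto; apply eq_sym; auto.
Qed.

Definition Pclosed (L : MVAlgebra) (P F : L -> Prop) := forall x y, F x -> P (x ==> y) -> F y.

Lemma bnd_unique (L : MVAlgebra) (P Q F : L -> Prop) x1 x2 z1 w1 z2 w2 :
  prime_impl_filter L P -> impl_filter L Q -> (forall z, P z -> Q z) -> Pclosed L P F ->
  equivP L Q x1 z1 -> equivP L Q x1 w1 -> F z1 -> ~ F w1 ->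
  equivP L Q x2 z2 -> equivP L Q x2 w2 -> F z2 -> ~ F w2 -> equivP L Q x1 x2.
Proof.
  intros [_ HP] HQ PQ HF [a1 b1] [c1 d1] Fz1 Fw1 [a2 b2] [c2 d2] Fz2 Fw2.
  assert (E1 : Q (w2 ==> z1)).
  { destruct (HP z1 w2) as [h|h]; [exfalso; eauto|auto]. }
  assert (E2 : Q (w1 ==> z2)).
  { destruct (HP z2 w1) as [h|h]; [exfalso; eauto|auto]. }
  split.
  - eapply f_trans; eauto. eapply f_trans; eauto.
  - eapply f_trans; eauto. eapply f_trans; eauto.
Qed.

Lemma qQ_char (L : MVAlgebra) (P Q F : L -> Prop) x u v :
  prime_impl_filter L P -> impl_filter L Q -> (forall z, P z -> Q z) -> Pclosed L P F ->
  equivP L Q x u -> equivP L Q x v -> F u -> ~ F v -> qQ L Q F = coset L Q x.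
Proof.
  intros HP HQ PQ HF Hu Hv Fu Fv.
  assert (B : boundary_coset L Q F (coset L Q x)).
  { split; [eauto|split; eauto]. }
  pose proof (epsilon_spec (inhabits (fun _ : L => False)) (boundary_coset L Q F)
     (ex_intro _ _ B)) as B'.
  fold (qQ L Q F) in B'.
  destruct B' as [[x' Ex] [[z [Cz Fz]] [w [Cw Fw]]]].
  rewrite Ex in *. apply coset_eq; auto.
  apply (bnd_unique L P Q F x' x z w u v); auto.
Qed.

Lemma pspec_up (L : MVAlgebra) (P F : L -> Prop) : PSpec L P F -> upward_closed L F.
Proof. intros [[[_ [H _]] _] _]. exact H. Qed.

Lemma pspec_closed (L : MVAlgebra) (P F : L -> Prop) : PSpec L P F -> Pclosed L P F.
Proof.
  intros HS x y Fx Pxy. pose proof (pspec_up _ _ _ HS) as Up.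
  destruct HS as [_ K]. rewrite <- K in Pxy.
  apply NNPP; intro Fy. apply (Pxy y Fy). apply (Up x); auto. apply join_l.
Qed.

Lemma pspec_prime (L : MVAlgebra) (P F : L -> Prop) : PSpec L P F ->
  forall a b, F (mvjoin L a b) -> F a \/ F b.
Proof. intros [[_ [_ H]] _]. exact H. Qed.

Lemma pspec_bnd (L : MVAlgebra) (P Q F : L -> Prop) : impl_filter L Q -> PSpec L P F ->
  (exists q, Q q /\ ~ P q) ->
  exists x u v, equivP L Q x u /\ equivP L Q x v /\ F u /\ ~ F v.
Proof.
  intros HQ HS [q [Qq Pq]]. destruct HS as [_ K]. rewrite <- K in Pq.
  unfold kernel in Pq. apply not_all_ex_not in Pq. destruct Pq as [a Ha].
  apply imply_to_and in Ha. destruct Ha as [Fa Ha]. apply NNPP in Ha.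
  exists a, (q ==> a), a. refine (conj _ (conj (eq_refl' _ _ _ HQ) (conj Ha Fa))).
  split. rewrite imp_K. apply HQ. apply (f_le _ _ q); auto; apply join_l.
Qed.

Lemma comparable (L : MVAlgebra) (P F G : L -> Prop) : prime_impl_filter L P ->
  Pclosed L P F -> Pclosed L P G -> (forall z, F z -> G z) \/ (forall z, G z -> F z).
Proof.
  intros [_ HP] HF HG. apply NNPP; intro N. apply not_or_and in N. destruct N as [N1 N2].
  apply not_all_ex_not in N1, N2. destruct N1 as [x N1], N2 as [y N2].
  apply imply_to_and in N1, N2. destruct N1, N2.
  destruct (HP x y); eauto.
Qed.

Lemma plus_closed (L : MVAlgebra) (P F : L -> Prop) : impl_filter L P -> Pclosed L P F ->
  Pclosed L P (Fplus L F).
Proof.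
  intros HP HF z y Hz Pzy Fy. apply Hz. apply (HF (y ==> mvzero)); auto.
  eapply f_le; eauto. apply imp_T.
Qed.

Lemma sqimp_closed (L : MVAlgebra) (P F G : L -> Prop) : impl_filter L P -> Pclosed L P F ->
  Pclosed L P G -> Pclosed L P (sqimp L F G).
Proof.
  intros HP HF HG z y Hz Pzy a Ga [Fya Gya]. apply (Hz a Ga).
  assert (P ((y ==> a) ==> (z ==> a))) by (eapply f_le; eauto; apply imp_T).
  split; eauto.
Qed.

Lemma eq_Q (L : MVAlgebra) (Q : L -> Prop) a b : impl_filter L Q -> Q a -> Q b -> equivP L Q a b.
Proof. intros HQ Ha Hb; split; [apply (f_le _ _ b)|apply (f_le _ _ a)]; auto; apply imp_K. Qed.

Lemma sq_one (L : MVAlgebra) (F G : L -> Prop) : sqimp L F G mvone.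
Proof. intros a Ga [_ H]. rewrite one_imp in H. auto. Qed.

Lemma sq_notin (L : MVAlgebra) (F G : L -> Prop) w b : upward_closed L F -> upward_closed L G ->
  F w -> G w -> ~ G b -> ~ sqimp L F G (w ==> b).
Proof.
  intros UF UG Fw Gw Gb H. apply (H b Gb). split; [apply (UF w)|apply (UG w)]; auto; apply join_l.
Qed.

Lemma part3 (L : MVAlgebra) (P Q F G : L -> Prop) q :
  prime_impl_filter L P -> impl_filter L Q -> (forall z, P z -> Q z) ->
  Pclosed L P F -> Pclosed L P G -> (forall z, F z -> G z) -> Q q -> ~ P q ->
  sqimp L F G = P -> qQ L Q F = qQ L Q G.
Proof.
  intros HP HQ PQ CF CG FG Qq Pq E. apply NNPP; intro N. apply Pq. rewrite <- E.
  intros a Ga [Fa Ga'].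
  assert (Eq : equivP L Q a (q ==> a)).
  { split. rewrite imp_K. apply HQ. apply (f_le _ _ q); auto; apply join_l. }
  apply N. rewrite (qQ_char L P Q F a (q ==> a) a), (qQ_char L P Q G a (q ==> a) a); auto;
  apply eq_refl'; auto.
Qed.

Theorem mainTheorem19 (L : MVAlgebra) (P Q : L -> Prop) :
  prime_impl_filter L P -> prime_impl_filter L Q ->
  (forall z, P z -> Q z) -> (exists z, Q z /\ ~ P z) ->
  forall F G : L -> Prop, PSpec L P F -> PSpec L P G ->
    qQ L Q (Fplus L F) = coset_neg L Q (qQ L Q F) /\
    qQ L Q (sqimp L F G) = coset_imp L Q (qQ L Q F) (qQ L Q G) /\
    (hat_equiv L P F G -> qQ L Q F = qQ L Q G).
Proof.
  intros HP HQ' PQ Hq F G HSF HSG.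
  assert (HQ : impl_filter L Q) by apply HQ'.
  assert (HPi : impl_filter L P) by apply HP.
  pose proof (pspec_closed _ _ _ HSF) as CF.
  pose proof (pspec_closed _ _ _ HSG) as CG.
  pose proof (pspec_up _ _ _ HSF) as UF.
  pose proof (pspec_up _ _ _ HSG) as UG.
  destruct (pspec_bnd L P Q F HQ HSF Hq) as [x [uF [vF [Hux [Hvx [FuF FvF]]]]]].
  destruct (pspec_bnd L P Q G HQ HSG Hq) as [y [uG [vG [Huy [Hvy [GuG GvG]]]]]].
  pose proof (qQ_char L P Q F x uF vF HP HQ PQ CF Hux Hvx FuF FvF) as EF.
  pose proof (qQ_char L P Q G y uG vG HP HQ PQ CG Huy Hvy GuG GvG) as EG.
  split; [|split].
  - rewrite EF. transitivity (coset L Q (mvneg x)).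
    + apply (qQ_char L P Q _ _ (mvneg vF) (mvneg uF)); auto.
      * apply plus_closed; auto.
      * apply eq_neg; auto.
      * apply eq_neg; auto.
      * unfold Fplus, Fsub. rewrite imp_zero, neg_neg. auto.
      * unfold Fplus, Fsub. rewrite imp_zero, neg_neg. auto.
    + apply functional_extensionality; intro z. apply propositional_extensionality.
      unfold coset_neg, coset. split.
      * intros H. exists x. split; [apply eq_refl'; auto|apply eq_sym; auto].
      * intros [w [Hw Hz]]. eapply eq_trans; [auto|apply eq_neg; exact Hw|apply eq_sym; auto].
  - rewrite EF, EG. transitivity (coset L Q (x ==> y)).
    + assert (SC : Pclosed L P (sqimp L F G)) by (apply sqimp_closed; auto).
      destruct (comparable L P F G HP CF CG) as [FG|GF].
      * destruct (classic (F uG)) as [FuG|nFuG].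
        -- assert (Exy : equivP L Q x y).
           { apply (bnd_unique L P Q F x y uF vF uG vG); auto. }
           apply (qQ_char L P Q _ _ mvone (uF ==> vG)); auto.
           ++ apply eq_sym, eq_Q; auto. apply HQ. apply Exy.
           ++ apply eq_imp; auto.
           ++ apply sq_one.
           ++ apply sq_notin; auto.
        -- apply (qQ_char L P Q _ _ (vF ==> uG) (uF ==> vG)); auto.
           ++ apply eq_imp; auto.
           ++ apply eq_imp; auto.
           ++ intros a Ga [Fa _].
              destruct (proj2 HP uG a) as [h|h].
              ** apply Ga. eauto.
              ** assert (h' : P (((vF ==> uG) ==> a) ==> ((vF ==> uG) ==> uG))).
                 { apply (f_le _ _ (a ==> uG)); auto. apply imp_T2. }
                 pose proof (CF _ _ Fa h') as J.
                 destruct (pspec_prime _ _ _ HSF _ _ J); auto.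
           ++ apply sq_notin; auto.
      * assert (Qxy : Q (x ==> y)).
        { destruct (proj2 HP vF uG) as [h|h].
          - eapply f_trans; [auto|apply Hvx|]. eapply f_trans; [auto|apply PQ, h|apply Huy].
          - exfalso. apply FvF. apply (CF uG); auto. }
        assert (QG : Q (uG ==> vG)).
        { eapply f_trans; [auto|apply Huy|apply Hvy]. }
        apply (qQ_char L P Q _ _ mvone (uG ==> vG)); auto.
        ++ apply eq_sym, eq_Q; auto. apply HQ.
        ++ apply eq_Q; auto.
        ++ apply sq_one.
        ++ apply sq_notin; auto.
    + apply functional_extensionality; intro z. apply propositional_extensionality.
      unfold coset_imp, coset. split.
      * intros H. exists x, y. split; [apply eq_refl'; auto|split; [apply eq_refl'; auto|apply eq_sym; auto]].
      * intros [a [b [Ha [Hb Hz]]]]. eapply eq_trans; [auto|apply eq_imp; eauto|apply eq_sym; auto].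
  - intros [E1 E2]. destruct Hq as [q [Qq Pq]].
    destruct (comparable L P F G HP CF CG) as [FG|GF].
    + apply (part3 L P Q F G q); auto.
    + symmetry. apply (part3 L P Q G F q); auto.
Qed.
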